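(* Let $n\ge 2$ and let $t\in\{1,\dots,n-1\}$. A code $\mathcal{C}\subseteq\{0,1\}^{n\times n}$ is a $(t,t)$-criss-cross deletion correcting code if and only if it is a $(t,t)$-criss-cross insertion correcting code.
   Context: For a binary array $\mathbf{X}$, $\mathbb{D}_{t_r,t_c}(\mathbf{X})$ denotes the set of all arrays obtained from $\mathbf{X}$ by deleting any $t_r$ rows and any $t_c$ columns, and $\mathbb{I}_{t_r,t_c}(\mathbf{X})$ the set of all binary arrays obtained by inserting $t_r$ rows and $t_c$ columns (arbitrary binary content, arbitrary positions). A code $\mathcal{C}\subseteq\{0,1\}^{n\times n}$ is a $(t_r,t_c)$-criss-cross deletion correcting code if $\mathbb{D}_{t_r,t_c}(\mathbf{X})\cap\mathbb{D}_{t_r,t_c}(\mathbf{Y})=\emptyset$ for all distinct $\mathbf{X},\mathbf{Y}\in\mathcal{C}$; a $(t_r,t_c)$-criss-cross insertion correcting code is defined analogously with $\mathbb{I}_{t_r,t_c}$. *)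

(* Defs.v *)
From mathcomp Require Import all_boot all_algebra.
Set Implicit Arguments. Unset Strict Implicit. Unset Printing Implicit Defensive.

Definition strict_incr (m n : nat) (f : 'I_m -> 'I_n) : Prop :=
  forall i j : 'I_m, (i < j)%N -> (f i < f j)%N.

Definition is_subarray (m1 n1 m2 n2 : nat)
    (Z : 'M[bool]_(m1, n1)) (X : 'M[bool]_(m2, n2)) : Prop :=
  exists (f : 'I_m1 -> 'I_m2) (g : 'I_n1 -> 'I_n2),
    strict_incr f /\ strict_incr g /\ Z = mxsub f g X.

Definition crisscross_del (n tr tc : nat) (X : 'M[bool]_(n, n))
    (Z : 'M[bool]_(n - tr, n - tc)) : Prop :=
  is_subarray Z X.

(* I_{tr,tc}(X): arrays obtained from X by inserting tr rows and tc columns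
   (arbitrary content and positions): the original rows/columns of X sit at
   increasing positions of Z and the inserted ones are arbitrary. *)
Definition crisscross_ins (n tr tc : nat) (X : 'M[bool]_(n, n))
    (Z : 'M[bool]_(n + tr, n + tc)) : Prop :=
  is_subarray X Z.

Definition crisscross_del_code (n tr tc : nat) (C : {set 'M[bool]_(n, n)}) : Prop :=
  forall X Y, X \in C -> Y \in C -> X <> Y ->
    forall Z, ~ (@crisscross_del n tr tc X Z /\ @crisscross_del n tr tc Y Z).

Definition crisscross_ins_code (n tr tc : nat) (C : {set 'M[bool]_(n, n)}) : Prop :=
  forall X Y, X \in C -> Y \in C -> X <> Y ->
    forall Z, ~ (@crisscross_ins n tr tc X Z /\ @crisscross_ins n tr tc Y Z).

(* Main.v *)
Require Import Defs.
From mathcomp Require Import all_boot all_algebra.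
From mathcomp Require Import zify.
Set Implicit Arguments. Unset Strict Implicit.

Lemma si_lt m n (f : 'I_m -> 'I_n) : strict_incr f ->
  forall i j, (f i < f j)%N = (i < j)%N.
Proof.
move=> hf i j; apply/idP/idP; last exact: hf.
case: (ltngtP i j) => [//| hji | /val_inj ->]; last by rewrite ltnn.
by move=> h; have := hf _ _ hji; rewrite ltnNge (ltnW h).
Qed.

Lemma si_inj m n (f : 'I_m -> 'I_n) : strict_incr f -> injective f.
Proof.
move=> hf i j e; case: (ltngtP i j) => [h | h | /val_inj //].
- by have := hf _ _ h; rewrite e ltnn.
- by have := hf _ _ h; rewrite e ltnn.
Qed.

Lemma card_prefix m (k : 'I_m) : #|[set k' : 'I_m | (k' < k)%N]| = k.
Proof.
have hk : (k <= m)%N := ltnW (ltn_ord k).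
have -> : [set k' : 'I_m | (k' < k)%N] = (widen_ord hk) @: [set: 'I_k].
  apply/setP => x; rewrite !inE; apply/idP/imsetP => [hx | [y _ ->]]; last by rewrite /= ltn_ord.
  by exists (Ordinal hx) => //; apply: val_inj.
have inj : injective (widen_ord hk).
  by move=> u w /(congr1 val) /= e; apply: val_inj.
by rewrite (card_imset _ inj) cardsT card_ord.
Qed.

Definition beta m n (p : 'I_m -> 'I_n) (i : nat) := #|[set k : 'I_m | (p k < i)%N]|.

Lemma beta_p m n (p : 'I_m -> 'I_n) k : strict_incr p -> beta p (p k) = k.
Proof.
move=> hp; rewrite /beta.
have -> : [set k' | (p k' < p k)%N] = [set k' : 'I_m | (k' < k)%N].
  by apply/setP => x; rewrite !inE si_lt.
exact: card_prefix.
Qed.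

Lemma beta_mono m n (p : 'I_m -> 'I_n) i j : (i <= j)%N -> (beta p i <= beta p j)%N.
Proof.
move=> hij; apply: subset_leq_card; apply/subsetP => x; rewrite !inE => h.
exact: leq_trans h hij.
Qed.

Lemma beta_gt m n (p : 'I_m -> 'I_n) k i : strict_incr p -> (p k < i)%N ->
  (k < beta p i)%N.
Proof.
move=> hp h; rewrite -{1}(beta_p k hp); apply: proper_card; apply/properP; split.
  apply/subsetP => x; rewrite !inE => h'; exact: ltn_trans h' h.
by exists k; rewrite !inE ?ltnn.
Qed.

Definition key m n (c : nat) (p : 'I_m -> 'I_n) (i : 'I_n) : nat :=
  beta p i * (2 * n).+1 + (if i \in codom p then 2 * n else c + i).

Lemma inner_lt m n c (p : 'I_m -> 'I_n) (i : 'I_n) : (c <= n)%N ->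
  ((if i \in codom p then 2 * n else c + i) < (2 * n).+1)%N.
Proof. by move=> hc; case: ifP => _; have := ltn_ord i; lia. Qed.

Lemma key_mono m n c (p : 'I_m -> 'I_n) (i j : 'I_n) : strict_incr p -> (c <= n)%N ->
  (i < j)%N -> (key c p i < key c p j)%N.
Proof.
move=> hp hc hij; rewrite /key.
have hb : (beta p i <= beta p j)%N := beta_mono p (ltnW hij).
move: hb; rewrite leq_eqVlt => /orP [/eqP eb | lb].
  rewrite eb ltn_add2l.
  case hi: (i \in codom p).
    move/codomP: hi => [k ik]; exfalso.
    have h1 := beta_gt hp (ltac:(by rewrite -ik) : (p k < j)%N).
    by move: eb h1; rewrite ik beta_p // => ->; rewrite ltnn.
  case: (j \in codom p); last by rewrite ltn_add2l.
  by have := ltn_ord i; lia.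
apply: (leq_trans (n := (beta p i).+1 * (2 * n).+1)).
  have := inner_lt p i hc.
  set B := (2 * n).+1; set r := (if _ then _ else _); move=> hr.
  by rewrite mulSn [X in (_ < X)%N]addnC ltn_add2l.
apply: leq_trans (leq_addr _ _); exact: leq_mul.
Qed.

Lemma key_eq m n (p p' : 'I_m -> 'I_n) (i j : 'I_n) : strict_incr p -> strict_incr p' ->
  key 0 p i = key n p' j -> exists k, i = p k /\ j = p' k.
Proof.
move=> hp hp'; rewrite /key => e.
have ri := inner_lt p i (leq0n n).
have rj := inner_lt p' j (leqnn n).
have er := congr1 (fun x => x %% (2 * n).+1) e; rewrite /= !modnMDl !modn_small // in er.
rewrite er in e; move/addIn/eqP: e; rewrite eqn_pmul2r // => /eqP eb.
move: er; case hi: (i \in codom p); case hj: (j \in codom p') => er;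
  try (by have := ltn_ord i; have := ltn_ord j; lia).
move/codomP: hi => [k ik]; move/codomP: hj => [k' jk].
move: eb; rewrite ik jk !beta_p // => /val_inj ekk.
by exists k; rewrite ekk.
Qed.

Lemma merge m n t (p p' : 'I_m -> 'I_n) : strict_incr p -> strict_incr p' ->
  (m + t = n)%N ->
  exists (a a' : 'I_n -> 'I_(n + t)), strict_incr a /\ strict_incr a' /\
    forall i j, a i = a' j -> exists k, i = p k /\ j = p' k.
Proof.
move=> hp hp' hmt.
pose kX := key 0 p; pose kY := key n p'.
have k3 k : kX (p k) = kY (p' k) by rewrite /kX /kY /key !beta_p // !codom_f.
pose R v := (#|[set i | (kX i < v)%N]| +
             #|[set j | (j \notin codom p') && (kY j < v)%N]|)%N.
have RltX i v : (kX i < v)%N -> (R (kX i) < R v)%N.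
  move=> h.
  have h1 : (#|[set i' | (kX i' < kX i)%N]| < #|[set i' | (kX i' < v)%N]|)%N.
    apply: proper_card; apply/properP; split.
      apply/subsetP => x; rewrite !inE => h'; exact: ltn_trans h' h.
    by exists i; rewrite !inE ?ltnn.
  have h2 : (#|[set j | (j \notin codom p') && (kY j < kX i)%N]| <=
             #|[set j | (j \notin codom p') && (kY j < v)%N]|)%N.
    apply: subset_leq_card; apply/subsetP => x; rewrite !inE => /andP[-> h'].
    exact: ltn_trans h' h.
  rewrite /R; lia.
have kcases j : (exists i, kY j = kX i) \/ (j \notin codom p').
  case: (boolP (j \in codom p')) => [/codomP [k ->] | hj]; last by right.
  by left; exists (p k); rewrite k3.
have RltY j v : (kY j < v)%N -> (R (kY j) < R v)%N.
  case: (kcases j) => [[i ->] | hj]; first exact: RltX.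
  move=> h.
  have h1 : (#|[set i' | (kX i' < kY j)%N]| <= #|[set i' | (kX i' < v)%N]|)%N.
    apply: subset_leq_card; apply/subsetP => x; rewrite !inE => h'.
    exact: ltn_trans h' h.
  have h2 : (#|[set j' | (j' \notin codom p') && (kY j' < kY j)%N]| <
             #|[set j' | (j' \notin codom p') && (kY j' < v)%N]|)%N.
    apply: proper_card; apply/properP; split.
      apply/subsetP => x; rewrite !inE => /andP[-> h'].
      exact: ltn_trans h' h.
    by exists j; rewrite !inE ?ltnn ?hj.
  rewrite /R; lia.
have cY : #|[set j : 'I_n | j \notin codom p']| = t.
  have e1 : (#|[set j : 'I_n | j \in codom p']| + #|[set j : 'I_n | j \notin codom p']|
     = n)%N.
    transitivity #|'I_n|; last exact: card_ord.
    rewrite -(cardsC [set j : 'I_n | j \in codom p']); congr (_ + _)%N.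
    by apply: eq_card => x; rewrite !inE.
  have e2 : #|[set j : 'I_n | j \in codom p']| = m.
    by rewrite cardsE card_codom ?card_ord //; exact: si_inj.
  lia.
have bnd1 (v : nat) : (#|[set j | (j \notin codom p') && (kY j < v)%N]| <= t)%N.
  rewrite -cY; apply: subset_leq_card; apply/subsetP => x; rewrite !inE.
  by case/andP.
have RX i : (R (kX i) < n + t)%N.
  have h1 : (#|[set i' | (kX i' < kX i)%N]| < n)%N.
    rewrite -[X in (_ < X)%N](card_ord n) -cardsT.
    apply: proper_card; apply/properP; split; first exact: subsetT.
    by exists i; rewrite !inE ?ltnn.
  have := bnd1 (kX i); rewrite /R; lia.
have RY j : (R (kY j) < n + t)%N.
  case: (kcases j) => [[i ->] // | hj].
  have h1 : (#|[set i' | (kX i' < kY j)%N]| <= n)%N.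
    by rewrite -[X in (_ <= X)%N](card_ord n); apply: max_card.
  have h2 : (#|[set j' | (j' \notin codom p') && (kY j' < kY j)%N]| < t)%N.
    rewrite -cY; apply: proper_card; apply/properP; split.
      by apply/subsetP => x; rewrite !inE; case/andP.
    by exists j; rewrite !inE ?ltnn ?hj.
  rewrite /R; lia.
exists (fun i => Ordinal (RX i)), (fun j => Ordinal (RY j)).
split; [|split].
- move=> i j hij /=; apply: RltX; exact: key_mono.
- move=> i j hij /=; apply: RltY; exact: key_mono.
- move=> i j /(congr1 val) /= e.
  apply: key_eq => //.
  case: (ltngtP (kX i) (kY j)) => [h | h | //].
  + by have := RltX _ _ h; rewrite e ltnn.
  + by have := RltY _ _ h; rewrite e ltnn.
Qed.

Lemma enum_incr N (S : {set 'I_N}) (x0 : 'I_N) m : (m <= #|S|)%N ->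
  exists s : 'I_m -> 'I_N, strict_incr s /\ forall k, s k \in S.
Proof.
move=> hm.
have srt : sorted (fun x y : 'I_N => (x < y)%N) (enum S).
  rewrite /enum_mem -enumT; apply: sorted_filter; first exact: ltn_trans.
  by have := iota_ltn_sorted 0 N; rewrite -val_enum_ord sorted_map.
have hsz : #|S| = size (enum S) by rewrite cardE.
exists (fun k => nth x0 (enum S) k); split.
  have tr : transitive (fun x y : 'I_N => (x < y)%N) by move=> ? ? ?; exact: ltn_trans.
  move=> i j hij; apply: (sorted_ltn_nth tr x0 srt) => //; rewrite inE -hsz.
  - exact: leq_trans (ltn_ord i) hm.
  - exact: leq_trans (ltn_ord j) hm.
move=> k; rewrite -mem_enum; apply: mem_nth; rewrite -hsz.
exact: leq_trans (ltn_ord k) hm.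
Qed.

Lemma common n t (a a' : 'I_n -> 'I_(n + t)) : strict_incr a -> strict_incr a' ->
  (2 <= n)%N ->
  exists p p' : 'I_(n - t) -> 'I_n, strict_incr p /\ strict_incr p' /\
    forall k, a (p k) = a' (p' k).
Proof.
move=> ha ha' hn.
have x0 : 'I_(n + t) by apply: (@Ordinal _ 0); lia.
pose A := [set r | r \in codom a]; pose A' := [set r | r \in codom a'].
have cA : #|A| = n by rewrite cardsE card_codom ?card_ord //; exact: si_inj.
have cA' : #|A'| = n by rewrite cardsE card_codom ?card_ord //; exact: si_inj.
have cU : (#|A :|: A'| <= n + t)%N.
  by rewrite -[X in (_ <= X)%N](card_ord (n + t)); apply: max_card.
have cI : (n - t <= #|A :&: A'|)%N.
  have := cardsUI A A'; rewrite cA cA'; lia.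
have [s [hs hsS]] := enum_incr x0 cI.
have ex1 k : exists i, a i = s k.
  by have := hsS k; rewrite !inE => /andP [/codomP [i ->] _]; exists i.
have ex2 k : exists i, a' i = s k.
  by have := hsS k; rewrite !inE => /andP [_ /codomP [i ->]]; exists i.
have [p hp] := fin_all_exists ex1.
have [p' hp'] := fin_all_exists ex2.
exists p, p'; split; [|split].
- by move=> i j hij; rewrite -(si_lt ha) !hp; exact: hs.
- by move=> i j hij; rewrite -(si_lt ha') !hp'; exact: hs.
- by move=> k; rewrite hp hp'.
Qed.

Lemma ins_to_del n t (X Y : 'M[bool]_(n, n)) (W : 'M[bool]_(n + t, n + t)) :
  (2 <= n)%N -> @crisscross_ins n t t X W -> @crisscross_ins n t t Y W ->
  exists Z, @crisscross_del n t t X Z /\ @crisscross_del n t t Y Z.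
Proof.
move=> hn [a [b [ha [hb eX]]]] [a' [b' [ha' [hb' eY]]]].
have [p [p' [hp [hp' epa]]]] := common ha ha' hn.
have [q [q' [hq [hq' eqb]]]] := common hb hb' hn.
exists (mxsub p q X); split.
  by exists p, q.
exists p', q'; split; [done | split; [done|]].
by apply/matrixP => i j; rewrite eX eY !mxE epa eqb.
Qed.

Lemma del_to_ins n t (X Y : 'M[bool]_(n, n)) (Z : 'M[bool]_(n - t, n - t)) :
  (t <= n)%N -> @crisscross_del n t t X Z -> @crisscross_del n t t Y Z ->
  exists W, @crisscross_ins n t t X W /\ @crisscross_ins n t t Y W.
Proof.
move=> htn [f [g [hf [hg eX]]]] [f' [g' [hf' [hg' eY]]]].
have hmt : (n - t + t = n)%N by lia.
have [a [a' [ha [ha' ca]]]] := merge hf hf' hmt.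
have [b [b' [hb [hb' cb]]]] := merge hg hg' hmt.
pose Y' (r c : 'I_(n + t)) :=
  if [pick i | a' i == r] is Some i then
    (if [pick j | b' j == c] is Some j then Y i j else false) else false.
pose W : 'M[bool]_(n + t, n + t) := (\matrix_(r, c)
  if [pick i | a i == r] is Some i then
    (if [pick j | b j == c] is Some j then X i j else Y' r c) else Y' r c)%R.
have eY' i j : Y' (a' i) (b' j) = Y i j.
  rewrite /Y'; case: pickP => [i0 /eqP /(si_inj ha') -> | /(_ i)]; last by rewrite eqxx.
  by case: pickP => [j0 /eqP /(si_inj hb') -> | /(_ j)]; last by rewrite eqxx.
exists W; split.
  exists a, b; split; [done | split; [done|]].
  apply/matrixP => i j; rewrite !mxE.
  case: pickP => [i0 /eqP /(si_inj ha) -> | /(_ i)]; last by rewrite eqxx.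
  by case: pickP => [j0 /eqP /(si_inj hb) -> | /(_ j)]; last by rewrite eqxx.
exists a', b'; split; [done | split; [done|]].
apply/matrixP => i j; rewrite !mxE.
case: pickP => [i0 /eqP e1 | _]; last by rewrite eY'.
case: pickP => [j0 /eqP e2 | _]; last by rewrite eY'.
have [k [-> ->]] := ca _ _ e1.
have [l [-> ->]] := cb _ _ e2.
have := congr1 (fun M : 'M[bool]_(n - t, n - t) => M k l) (etrans (esym eX) eY).
by rewrite /= !mxE.
Qed.

Unset Implicit Arguments.

Theorem corollary1 (n t : nat) (C : {set 'M[bool]_(n, n)}) :
  (2 <= n)%N -> (1 <= t)%N -> (t <= n - 1)%N ->
  @crisscross_del_code n t t C <-> @crisscross_ins_code n t t C.
Proof.
move=> hn ht htn; split.
- move=> H X Y hX hY hXY W [h1 h2].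
  have [Z [z1 z2]] := ins_to_del hn h1 h2.
  exact: (H X Y hX hY hXY Z).
- move=> H X Y hX hY hXY Z [h1 h2].
  have htn' : (t <= n)%N by lia.
  have [W [w1 w2]] := del_to_ins htn' h1 h2.
  exact: (H X Y hX hY hXY W).
Qed.
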